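(* Let $r\ge3$, and let $M,N\in\mathrm{EKP}(K_r)$ be indecomposable with $M\not\cong P_0(r)$. Then: (1) $\lim_{n\to\infty}\nu(\sigma_{K_r}^{-n}(M))=L_r$. (2) The sequence $(\mu(\sigma_{K_r}^{-n}(M)))_{n\in\mathbb N_0}$ converges to $\frac1{L_r-1}$. (3) If $M$ is regular, then $(\mu(\sigma_{K_r}^{-n}(M)))_{n\in\mathbb N_0}$ is strictly decreasing. (4) If $M$ is regular and $N$ is preprojective, then $\mu(N)<\frac1{L_r-1}<\mu(M)$.
   Context: $k$ algebraically closed of arbitrary characteristic; $K_r$ the Kronecker quiver with arrows $\gamma_1,\dots,\gamma_r:1\to2$, $A_r=\bigoplus_ik\gamma_i$. $\mathrm{EKP}(K_r)$: representations $M=(M_1,M_2,(M(\gamma_i)))$ with $\sum_ia_iM(\gamma_i)$ injective for all $0\ne(a_i)\in k^r$. $P_0(r)=(0,k)$. For $M\in\mathrm{EKP}(K_r)$ nonzero, $\mu(M)=\dim_kM_1/(\dim_kM_2-\dim_kM_1)$; for $N$ with $N_1\ne0$, $\nu(N)=\dim_kN_2/\dim_kN_1$. $L_r=\frac{r+\sqrt{r^2-4}}2$. $\sigma_{K_r}^{-1}(M)=(M_2,\mathrm{coker}\,\varphi)$ where $\varphi:M_1\to M_2^r$, $m\mapsto(M(\gamma_i)m)_i$, and $\sigma_{K_r}^{-1}(M)(\gamma_i)$ is the $i$-th inclusion $M_2\to M_2^r$ followed by projection to $\mathrm{coker}\,\varphi$; $\sigma^{-n}_{K_r}$ is its $n$-fold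 iterate (it maps $\mathrm{EKP}(K_r)$ into itself). An indecomposable representation is preprojective (preinjective) if $\tau_{K_r}^n$ ($\tau_{K_r}^{-n}$) kills it for some $n$, $\tau_{K_r}$ the Auslander–Reiten translation; it is regular if it is neither. *)

(* Defs.v *)
From HB Require Import structures.
From mathcomp Require Import all_boot all_order all_algebra.
From mathcomp Require Import all_classical all_reals all_analysis.
Set Implicit Arguments. Unset Strict Implicit. Unset Printing Implicit Defensive.
Import Order.TTheory GRing.Theory Num.Theory.
Local Open Scope ring_scope.

(* Finite-dimensional representations of the r-Kronecker quiver K_r over k:
   M_1 = k^(rd1), M_2 = k^(rd2), and M(gamma_i) is the matrix (rmat M i),
   acting on ROW vectors: m |-> m *m rmat M i. *)
Record krep (k : fieldType) (r : nat) := KRep {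
  rd1 : nat;
  rd2 : nat;
  rmat : 'I_r -> 'M[k]_(rd1, rd2) }.

Section Kronecker.
Variables (k : fieldType) (r : nat).
Implicit Types M N : krep k r.

Definition is_zero_rep M := (rd1 M = 0%N) /\ (rd2 M = 0%N).

Definition P0 : krep k r := @KRep k r 0 1 (fun _ => 0).

Definition krep_iso M N :=
  exists (f1 : 'M[k]_(rd1 M, rd1 N)) (f2 : 'M[k]_(rd2 M, rd2 N)),
    [/\ row_free f1 && row_full f1, row_free f2 && row_full f2 &
        forall i, rmat M i *m f2 = f1 *m rmat N i].

Definition EKP M :=
  forall a : 'rV[k]_r, a != 0 -> row_free (\sum_(i < r) a 0 i *: rmat M i).

(* subrepresentations, given by subspaces U1 of M_1 and U2 of M_2
   (row spaces of the matrices) *)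
Definition subrep M (U1 : 'M[k]_(rd1 M)) (U2 : 'M[k]_(rd2 M)) :=
  forall i, (U1 *m rmat M i <= U2)%MS.

Definition decomposable M :=
  exists (U1 V1 : 'M[k]_(rd1 M)) (U2 V2 : 'M[k]_(rd2 M)),
    [/\ subrep U1 U2, subrep V1 V2,
        (\rank U1 + \rank V1 = rd1 M)%N /\ (1%:M <= U1 + V1)%MS,
        (\rank U2 + \rank V2 = rd2 M)%N /\ (1%:M <= U2 + V2)%MS &
        (0 < \rank U1 + \rank U2)%N /\ (0 < \rank V1 + \rank V2)%N].

Definition indecomposable M := (0 < rd1 M + rd2 M)%N /\ ~ decomposable M.

(* sigma^{-1}_{K_r}(M) = (M_2, coker phi), phi : M_1 -> M_2^r, m |-> (M(gamma_i) m)_i *)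
Definition phi_mx M : 'M[k]_(rd1 M, \sum_(j < r) rd2 M) :=
  \mxrow_(j < r) rmat M j.
Definition incl_mx M (i : 'I_r) : 'M[k]_(rd2 M, \sum_(j < r) rd2 M) :=
  \mxrow_(j < r) (if j == i then 1%:M else 0 : 'M[k]_(rd2 M)).
(* projection onto the cokernel: its row kernel is exactly the image of phi
   and it has full column rank *)
Definition coker_proj M := col_base (cokermx (phi_mx M)).
Definition sigma_inv M : krep k r :=
  @KRep k r (rd2 M) (\rank (cokermx (phi_mx M)))
        (fun i => incl_mx M i *m coker_proj M).

(* sigma_{K_r}(M) = (ker psi, M_1), psi : M_1^r -> M_2, (m_i) |-> sum_i M(gamma_i) m_i;
   arrows are the restrictions of the projections M_1^r -> M_1 *)
Definition psi_mx M : 'M[k]_(\sum_(j < r) rd1 M, rd2 M) :=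
  \mxcol_(j < r) rmat M j.
Definition proj_mx M (i : 'I_r) : 'M[k]_(\sum_(j < r) rd1 M, rd1 M) :=
  \mxcol_(j < r) (if j == i then 1%:M else 0 : 'M[k]_(rd1 M)).
Definition ker_basis M := row_base (kermx (psi_mx M)).
Definition sigma M : krep k r :=
  @KRep k r (\rank (kermx (psi_mx M))) (rd1 M)
        (fun i => ker_basis M *m proj_mx M i).

(* Auslander-Reiten translation via the Coxeter functors: tau = sigma^2,
   tau^{-1} = sigma^{-2} *)
Definition tau M := sigma (sigma M).
Definition tau_inv M := sigma_inv (sigma_inv M).

Definition preprojective M :=
  indecomposable M /\ exists n : nat, is_zero_rep (iter n tau M).
Definition preinjective M :=
  indecomposable M /\ exists n : nat, is_zero_rep (iter n tau_inv M).
Definition regular M :=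
  indecomposable M /\ ~ preprojective M /\ ~ preinjective M.

Definition mu (R : realType) M : R :=
  (rd1 M)%:R / ((rd2 M)%:R - (rd1 M)%:R).
Definition nu (R : realType) M : R := (rd2 M)%:R / (rd1 M)%:R.

End Kronecker.

Definition L_r (R : realType) (r : nat) : R :=
  (r%:R + Num.sqrt (r%:R ^+ 2 - 4)) / 2.

(* Main.v *)
Require Import Defs.
From HB Require Import structures.
From mathcomp Require Import all_boot all_order all_algebra.
From mathcomp Require Import all_classical all_reals all_analysis.
From mathcomp Require Import ring lra zify.
Import Order.TTheory GRing.Theory Num.Theory.
Import numFieldNormedType.Exports.
Local Open Scope classical_set_scope.
Local Open Scope ring_scope.

Set Implicit Arguments. Unset Strict Implicit. Unset Printing Implicit Defensive.

Section LA.
Variables (k : fieldType) (r : nat).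
Implicit Types X Y : krep k r.

Lemma psi_mul X m (Z : 'M[k]_(m, \sum_(j < r) rd1 X)) :
  Z *m psi_mx X = \sum_j submxrow Z j *m rmat X j.
Proof. by rewrite -{1}(submxrowK Z) /psi_mx mul_mxrow_mxcol. Qed.

Lemma proj_mul X m (Z : 'M[k]_(m, \sum_(j < r) rd1 X)) i :
  Z *m Defs.proj_mx X i = submxrow Z i.
Proof.
rewrite -{1}(submxrowK Z) /Defs.proj_mx mul_mxrow_mxcol (bigD1 i) //= eqxx mulmx1.
rewrite big1 ?addr0 // => j /negbTE ->; exact: mulmx0.
Qed.

Lemma phi_mul X m (Z : 'M[k]_(m, rd1 X)) :
  Z *m phi_mx X = \mxrow_j (Z *m rmat X j).
Proof. by rewrite /phi_mx mul_mxrow. Qed.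

Lemma incl_mul X m (Z : 'M[k]_(m, rd2 X)) i :
  Z *m incl_mx X i = \mxrow_j (if j == i then Z else 0).
Proof.
rewrite /incl_mx mul_mxrow; apply: eq_mxrow => j.
by case: (j == i); rewrite ?mulmx1 ?mulmx0.
Qed.

End LA.

Section LA2.
Variables (k : fieldType) (r : nat).
Implicit Types X Y : krep k r.

Lemma sum_const_r n : (\sum_(j < r) n)%N = (r * n)%N.
Proof. by rewrite big_const_ord iter_addn_0 mulnC. Qed.

Lemma EKP_arrow X i : EKP X -> row_free (rmat X i).
Proof.
move=> E; have := E (delta_mx 0 i).
have -> : \sum_(j < r) (delta_mx 0 i : 'rV[k]_r) 0 j *: rmat X j = rmat X i.
  rewrite (bigD1 i) //= mxE !eqxx scale1r big1 ?addr0 // => j nji.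
  by rewrite mxE (negbTE nji) andbF scale0r.
apply; apply/eqP => /matrixP /(_ 0 i); rewrite !mxE !eqxx /=.
by move/eqP; rewrite oner_eq0.
Qed.

Lemma free_eq0 m n (A : 'M[k]_(m, n)) p (v : 'M[k]_(p, m)) :
  row_free A -> v *m A = 0 -> v = 0.
Proof. by move=> fA /eqP; rewrite mulmx_free_eq0 // => /eqP. Qed.

Lemma phi_free X i0 : row_free (rmat X i0) -> row_free (phi_mx X).
Proof.
move=> fA; apply: inj_row_free => v; rewrite phi_mul => /(congr1 (fun A => submxrow A i0)).
rewrite mxrowK submxrow0; exact: free_eq0.
Qed.

Lemma other_idx (i : 'I_r) : (1 < r)%N -> exists j : 'I_r, j != i.
Proof.
move=> r2; have h : ((if val i == 0%N then 1 else 0) < r)%N.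
  by case: ifP => // _; apply: leq_trans r2.
exists (Ordinal h); apply/eqP => /(congr1 val) /=.
by case: ifP => [/eqP -> | /negbT]; [| rewrite eq_sym => /eqP].
Qed.

Hypothesis r2 : (1 < r)%N.

Lemma sigma_inv_free X : (forall i, row_free (rmat X i)) ->
  forall i, row_free (rmat (sigma_inv X) i).
Proof.
move=> fX i; apply: inj_row_free => v /=; rewrite mulmxA => h.
have : (v *m incl_mx X i <= phi_mx X)%MS.
  rewrite submxE -(mulmx_base (cokermx (phi_mx X))) mulmxA.
  by rewrite /coker_proj in h; rewrite h mul0mx.
case/submxP => x; rewrite incl_mul phi_mul => e.
have [j nji] := other_idx i r2.
have := congr1 (fun A => submxrow A j) e; rewrite !mxrowK (negbTE nji) => /esym /free_eq0.
move=> /(_ (fX j)) x0.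
by have := congr1 (fun A => submxrow A i) e; rewrite !mxrowK eqxx x0 mul0mx.
Qed.

Lemma sigma_inv_dims X : (forall i, row_free (rmat X i)) ->
  rd1 (sigma_inv X) = rd2 X /\ rd2 (sigma_inv X) = (r * rd2 X - rd1 X)%N.
Proof.
move=> fX; split => //=.
have [i0 _] := other_idx (Ordinal r2) r2.
rewrite mxrank_coker [X in (X - _)%N]sum_const_r.
by have := phi_free (fX i0); rewrite /row_free => /eqP ->.
Qed.

End LA2.

Section LA3.
Variables (k : fieldType) (r : nat).
Implicit Types X Y : krep k r.

Lemma arrow_sub_psi X i : (rmat X i <= psi_mx X)%MS.
Proof.
apply/submxP; exists (\mxrow_(j < r) (if j == i then 1%:M else 0 : 'M[k]_(rd1 X))).
rewrite psi_mul (bigD1 i) //= mxrowK eqxx mul1mx big1 ?addr0 // => j /negbTE nji.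
by rewrite mxrowK nji mul0mx.
Qed.

Lemma psi_sub_arrows X m (B : 'M[k]_(m, rd2 X)) :
  (forall i, (rmat X i <= B)%MS) -> (psi_mx X <= B)%MS.
Proof.
move=> h; rewrite -[psi_mx X]mul1mx psi_mul; apply: summx_sub => i _.
exact: submx_trans (submxMl _ _) (h i).
Qed.

Lemma psi_full X : indecomposable X -> (0 < rd1 X)%N ->
  \rank (psi_mx X) = rd2 X.
Proof.
move=> [_ nd] a0; apply/eqP; rewrite eqn_leq rank_leq_col /=.
rewrite leqNgt; apply/negP => lt; apply: nd.
set A := (<<psi_mx X>>)%MS.
have rA : \rank A = \rank (psi_mx X) by rewrite mxrank_gen.
exists 1%:M, 0, A, (A^C)%MS; split.
- by move=> i; rewrite mul1mx genmxE arrow_sub_psi.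
- by move=> i; rewrite mul0mx sub0mx.
- by rewrite mxrank1 mxrank0 addn0 addsmxSl.
- rewrite mxrank_compl subnKC ?rank_leq_col //; split => //.
  by rewrite sub1mx addsmx_compl_full.
- rewrite mxrank1 mxrank0 mxrank_compl rA subn_gt0.
  by split; [exact: leq_trans a0 (leq_addr _ _) | exact: lt].
Qed.

Lemma sigma_rd1 X : rd1 (Defs.sigma X) = (r * rd1 X - \rank (psi_mx X))%N.
Proof. by rewrite /= mxrank_ker [X in (X - _)%N]sum_const_r. Qed.

Lemma sigma_rd2 X : rd2 (Defs.sigma X) = rd1 X.
Proof. by []. Qed.

End LA3.

Lemma subB_sub (k : fieldType) m1 m2 n (A B : 'M[k]_(m1, n)) (C : 'M[k]_(m2, n)) :
  (A <= C)%MS -> (B <= C)%MS -> (A - B <= C)%MS.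
Proof. by move=> hA hB; apply: addmx_sub => //; rewrite eqmx_opp. Qed.

Lemma cap0_of_ranks (k : fieldType) n (U V : 'M[k]_n) :
  (\rank U + \rank V)%N = n -> (1%:M <= U + V)%MS -> (U :&: V)%MS = 0.
Proof.
move=> rk full; apply/eqP; rewrite -mxrank_eq0.
have := mxrank_sum_cap U V; rewrite rk.
move: full; rewrite sub1mx /row_full => /eqP ->.
by move=> h; apply/eqP; move: h; rewrite -[in RHS](addn0 n) => /addnI.
Qed.

Section Cap.
Variables (k : fieldType) (r : nat) (X : krep k r).
Notation a := (rd1 X). Notation b := (rd2 X).
Notation kb := (ker_basis X).
Variables (U1 V1 : 'M[k]_(\rank (kermx (psi_mx X)))) (U2 V2 : 'M[k]_a).
Hypothesis sU : forall i, (U1 *m (kb *m Defs.proj_mx X i) <= U2)%MS.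
Hypothesis sV : forall i, (V1 *m (kb *m Defs.proj_mx X i) <= V2)%MS.
Hypothesis fullK : (1%:M <= U1 + V1)%MS.
Hypothesis capUV : (U2 :&: V2)%MS = 0.

Definition WW (U : 'M[k]_a) : 'M[k]_b := (\sum_(j < r) <<U *m rmat X j>>)%MS.

Lemma kb_psi : kb *m psi_mx X = 0.
Proof. by apply/sub_kermxP; rewrite /ker_basis eq_row_base. Qed.

Lemma decomp_sum m (C : 'M[k]_(m, b)) (U : 'M[k]_a) : (C <= WW U)%MS ->
  exists x : forall j : 'I_r, 'M[k]_(m, a), C = \sum_j x j *m U *m rmat X j.
Proof.
case/sub_sumsmxP => u ->.
exists (fun j => u j *m <<U *m rmat X j>>%MS *m pinvmx (U *m rmat X j)).
apply: eq_bigr => j _; rewrite -mulmxA mulmxKpV //.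
by apply: submx_trans (submxMl _ _) _; rewrite genmxE.
Qed.

Lemma WW_cap : (WW U2 :&: WW V2)%MS = 0.
Proof.
apply/eqP; rewrite -submx0; set C := (WW U2 :&: WW V2)%MS.
have [xU eU] := decomp_sum (capmxSl (WW U2) (WW V2)).
have [xV eV] := decomp_sum (capmxSr (WW U2) (WW V2)).
set Z := \mxrow_(j < r) (xU j *m U2 - xV j *m V2).
have Z0 : Z *m psi_mx X = 0.
  rewrite psi_mul; under eq_bigr do rewrite mxrowK mulmxBl.
  by rewrite sumrB -eU -eV subrr.
have : (Z <= kb)%MS by rewrite /ker_basis eq_row_base; apply/sub_kermxP.
case/submxP => c eZ.
have /sub_addsmxP [[c1 c2] /= ec] : (c <= U1 + V1)%MS.
  by apply: submx_full; rewrite -sub1mx.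
set P := c1 *m U1 *m kb.
have PU : forall j, (submxrow P j <= U2)%MS.
  move=> j; rewrite -proj_mul -(mulmxA (c1 *m U1) kb) -(mulmxA c1 U1).
  exact: submx_trans (submxMl _ _) (sU j).
have QV : forall j, (submxrow (c2 *m V1 *m kb) j <= V2)%MS.
  move=> j; rewrite -proj_mul -(mulmxA (c2 *m V1) kb) -(mulmxA c2 V1).
  exact: submx_trans (submxMl _ _) (sV j).
have eP : \mxrow_(j < r) (xU j *m U2) = P.
  rewrite -[P]submxrowK; apply: eq_mxrow => j.
  apply/eqP; rewrite -subr_eq0 -submx0 -capUV sub_capmx.
  rewrite subB_sub ?submxMl ?PU //=.
  have : submxrow Z j = submxrow P j + submxrow (c2 *m V1 *m kb) j.
    by rewrite -submxrowD eZ ec mulmxDl.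
  rewrite mxrowK => ej.
  have -> : xU j *m U2 - submxrow P j = xV j *m V2 + submxrow (c2 *m V1 *m kb) j.
    rewrite -[xU j *m U2](subrK (xV j *m V2)) ej.
    by rewrite addrAC (addrAC (submxrow P j)) subrr add0r addrC.
  by apply: addmx_sub; rewrite ?submxMl ?QV.
have -> : C = \mxrow_(j < r) (xU j *m U2) *m psi_mx X.
  by rewrite /C eU psi_mul; apply: eq_bigr => j _; rewrite mxrowK.
by rewrite eP -mulmxA kb_psi mulmx0 sub0mx.
Qed.

End Cap.

Section LA5.
Variables (k : fieldType) (r : nat).
Implicit Types X Y : krep k r.

Lemma nz_part X (U1 : 'M[k]_(\rank (kermx (psi_mx X)))) (U2 : 'M[k]_(rd1 X)) :
  (0 < \rank U1 + \rank U2)%N ->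
  (forall i, (U1 *m (ker_basis X *m Defs.proj_mx X i) <= U2)%MS) ->
  (0 < \rank U2)%N.
Proof.
move=> n1 sU; rewrite lt0n mxrank_eq0; apply/negP => /eqP U20.
move: n1; suff -> : U1 = 0 by rewrite mxrank0 U20 mxrank0.
have : U1 *m ker_basis X = 0.
  rewrite -[U1 *m _]submxrowK -[RHS](mxrow0 (q_ := fun=> rd1 X)).
  apply: eq_mxrow => i; rewrite -proj_mul -mulmxA.
  by apply/eqP; rewrite -submx0 -U20.
by move/free_eq0; apply; apply: row_base_free.
Qed.

Lemma sigma_indec X : indecomposable X -> (0 < rd1 X)%N ->
  indecomposable (Defs.sigma X).
Proof.
move=> iX a0; have rpsi := psi_full iX a0.
case: iX => _ nd; split; first by rewrite /= addnC ltn_addr.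
case=> U1 [V1 [U2 [V2 [sU sV [rk1 f1] [rk2 f2] [n1 n2]]]]].
apply: nd; exists U2, V2, (WW U2), (WW V2); split.
- by move=> i; apply: (sumsmx_sup i) => //; rewrite genmxE.
- by move=> i; apply: (sumsmx_sup i) => //; rewrite genmxE.
- by [].
- have full : (1%:M <= WW U2 + WW V2)%MS.
    have : (1%:M <= psi_mx X)%MS by rewrite sub1mx /row_full rpsi.
    move/submx_trans; apply; apply: psi_sub_arrows => i.
    rewrite -[rmat X i]mul1mx; apply: submx_trans (submxMr _ f2) _.
    rewrite addsmxMr; apply: addsmxS; apply: (sumsmx_sup i) => //; rewrite genmxE //.
  split => //.
  have := mxrank_sum_cap (WW U2) (WW V2).
  rewrite (WW_cap sU sV f1 (cap0_of_ranks rk2 f2)) mxrank0 addn0 => <-.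
  by move: full; rewrite sub1mx => /eqP.
- split.
  + by apply: leq_trans (nz_part n1 sU) (leq_addr _ _).
  + by apply: leq_trans (nz_part n2 sV) (leq_addr _ _).
Qed.

End LA5.

Section LA6.
Variables (k : closedFieldType) (r : nat).
Implicit Types X Y : krep k r.

Lemma sum_delta m n (F : 'I_r -> 'M[k]_(m, n)) i :
  \sum_j (delta_mx 0 i : 'rV[k]_r) 0 j *: F j = F i.
Proof.
rewrite (bigD1 i) //= mxE !eqxx scale1r big1 ?addr0 // => j nji.
by rewrite mxE (negbTE nji) andbF scale0r.
Qed.

Lemma EKP_le X : (0 < r)%N -> EKP X -> (rd1 X <= rd2 X)%N.
Proof.
move=> r0 E; have := EKP_arrow (Ordinal r0) E.
by rewrite /row_free => /eqP <-; apply: rank_leq_col.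
Qed.

Lemma EKP_lt X : (1 < r)%N -> EKP X -> (0 < rd1 X)%N -> (rd1 X < rd2 X)%N.
Proof.
move=> r2 E a0; have r0 : (0 < r)%N by apply: ltnW.
rewrite ltn_neqAle EKP_le // andbT; apply/negP => /eqP eab.
set i1 := Ordinal r0; have [i2 n21] := other_idx i1 r2.
have f1 := EKP_arrow i1 E.
case/row_freeP: (f1) => B AB.
have fB : row_free B.
  rewrite /row_free eqn_leq rank_leq_row /=.
  have := mxrankM_maxr (rmat X i1) B; rewrite AB mxrank1.
  by move=> h; rewrite -[in X in (X <= _)%N]eab.
set C := rmat X i2 *m B.
have [lam] : exists lam, eigenvalue C lam.
  have : size (char_poly C) != 1%N.
    by rewrite size_char_poly; move: a0; case: (rd1 X).
  by case/closed_rootP => x; rewrite -eigenvalue_root_char => ?; exists x.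
case/eigenvalueP => v vC v0.
have h : v *m (rmat X i2 - lam *: rmat X i1) = 0.
  apply: (free_eq0 fB).
  rewrite mulmxBr mulmxBl -(mulmxA v (rmat X i2)) vC -scalemxAr -scalemxAl.
  by rewrite -(mulmxA v) AB mulmx1 subrr.
have := E (delta_mx 0 i2 - lam *: delta_mx 0 i1).
have -> : \sum_(i < r) (delta_mx 0 i2 - lam *: delta_mx 0 i1 : 'rV[k]_r) 0 i *: rmat X i
          = rmat X i2 - lam *: rmat X i1.
  have e : forall j, (delta_mx 0 i2 - lam *: delta_mx 0 i1 : 'rV[k]_r) 0 j
     = (delta_mx 0 i2 : 'rV[k]_r) 0 j - lam * (delta_mx 0 i1 : 'rV[k]_r) 0 j.
    by move=> j; rewrite !mxE.
  under eq_bigr do rewrite e scalerBl -scalerA.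
  by rewrite sumrB -scaler_sumr !sum_delta.
move=> H.
have nz : (delta_mx 0 i2 - lam *: delta_mx 0 i1 : 'rV[k]_r) != 0.
  apply/eqP => /matrixP /(_ 0 i2); rewrite !mxE !eqxx (negbTE n21) /=.
  by rewrite mulr0 subr0 => /eqP; rewrite oner_eq0.
by have := free_eq0 (H nz) h; move/eqP; rewrite (negbTE v0).
Qed.

End LA6.

Section Lfacts.
Variables (R : realType) (r : nat).
Hypothesis r3 : (3 <= r)%N.
Let l := L_r R r.

Lemma r3R : 3 <= r%:R :> R.
Proof. by rewrite (ler_nat R 3 r). Qed.

Lemma Lsq : l ^+ 2 = r%:R * l - 1.
Proof.
have h : 0 <= r%:R ^+ 2 - 4 :> R by have := r3R; nra.
rewrite /l /L_r; set s := Num.sqrt _.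
have hs : s ^+ 2 = r%:R ^+ 2 - 4 by rewrite sqr_sqrtr.
by apply/eqP; rewrite -subr_eq0; apply/eqP; nra.
Qed.

Lemma Lgt : r%:R < 2 * l.
Proof.
rewrite /l /L_r; have : 0 < Num.sqrt (r%:R ^+ 2 - 4 : R).
  by rewrite sqrtr_gt0; have := r3R; nra.
lra.
Qed.

Lemma Lgt1 : 1 < l.
Proof. by have := Lgt; have := r3R; lra. Qed.

End Lfacts.

Section Seq.
Variables (R : realType) (r : nat) (A B : nat -> nat).
Hypothesis r3 : (3 <= r)%N.
Hypothesis HA : forall n, A n.+1 = B n.
Hypothesis HB : forall n, B n.+1 = (r * B n - A n)%N.
Hypothesis H0 : (A 0 <= B 0)%N.
Hypothesis Hb0 : (0 < B 0)%N.
Let l := L_r R r.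

Lemma inv_seq n : (A n <= B n)%N /\ (0 < B n)%N.
Proof.
elim: n => [|n [h1 h2]]; first by [].
rewrite HA HB; split; first nia.
nia.
Qed.

Lemma A_pos n : (0 < n)%N -> (0 < A n)%N.
Proof. by case: n => // n _; rewrite HA; case: (inv_seq n). Qed.

Lemma BR n : (B n.+1)%:R = r%:R * (B n)%:R - (A n)%:R :> R.
Proof.
rewrite HB natrB ?natrM //; case: (inv_seq n) => h1 h2; nia.
Qed.

Definition vv n : R := (B n)%:R - l * (A n)%:R.

Lemma vv_step n : vv n.+1 * l = vv n.
Proof.
rewrite /vv BR HA; have := Lsq R r3; rewrite -/l => hl.
apply/eqP; rewrite -subr_eq0; apply/eqP.
transitivity (- (B n)%:R * (l ^+ 2 - (r%:R * l - 1)) : R); first ring.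
by rewrite hl subrr mulr0.
Qed.

Lemma vv_n n : vv n = vv 0 * (l^-1) ^+ n.
Proof.
have l0 : l != 0 by have := Lgt1 R r3; rewrite -/l; lra.
elim: n => [|n IH]; first by rewrite expr0 mulr1.
by rewrite exprS mulrCA -IH -(vv_step n) mulrC mulrK // unitfE.
Qed.

Definition nuS n : R := (B n)%:R / (A n)%:R.

Lemma nuS_l n : (0 < n)%N -> nuS n - l = vv n / (A n)%:R.
Proof.
move=> n0; have := A_pos n0; rewrite -(ltr0n R) => a0.
rewrite /nuS /vv; field; lra.
Qed.

Lemma nuS_bound n : (0 < n)%N -> `|nuS n - l| <= `|vv 0| * (l^-1) ^+ n.
Proof.
move=> n0; rewrite nuS_l // vv_n normrM.
have := A_pos n0; rewrite -(ler_nat R 1) => a1.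
have lp : 0 < l^-1 by rewrite invr_gt0; have := Lgt1 R r3; rewrite -/l; lra.
rewrite normrM (ger0_norm (exprn_ge0 _ (ltW lp))) normfV (ger0_norm (ltW (lt_le_trans ltr01 a1))).
rewrite -mulrA ler_wpM2l // ler_pdivrMr; last by lra.
rewrite ler_peMr //; exact: exprn_ge0 (ltW lp).
Qed.

End Seq.

Section Seq2.
Variables (R : realType) (r : nat) (A B : nat -> nat).
Hypothesis r3 : (3 <= r)%N.
Hypothesis HA : forall n, A n.+1 = B n.
Hypothesis HB : forall n, B n.+1 = (r * B n - A n)%N.
Hypothesis H0 : (A 0 <= B 0)%N.
Hypothesis Hb0 : (0 < B 0)%N.
Let l := L_r R r.

Lemma nu_cvg : (fun n => (B n)%:R / (A n)%:R : R) @ \oo --> l.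
Proof.
set c := `|vv R r A B 0|.
have lp : 0 < l^-1 by rewrite invr_gt0; have := Lgt1 R r3; rewrite -/l; lra.
have l1 : l^-1 < 1 by rewrite invf_lt1; have := Lgt1 R r3; rewrite -/l; lra.
have g : (fun n => c * (l^-1) ^+ n) @ \oo --> (0:R).
  have := @cvg_expr R (l^-1); rewrite ger0_norm ?(ltW lp) // => /(_ l1) h.
  by have := cvgMl_tmp (a := c) h; rewrite mulr0; apply.
have nb : \forall n \near \oo, (0 < n)%N by exists 1%N.
apply: (squeeze_cvgr (f := fun n => l - c * (l^-1) ^+ n) (h := fun n => l + c * (l^-1) ^+ n)).
- apply: filterS nb => n n0.
  by have := nuS_bound R r3 HA HB H0 Hb0 n0; rewrite -/l ler_distl.
- by rewrite -[X in _ --> X]subr0; apply: cvgB => //; apply: cvg_cst.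
- by rewrite -[X in _ --> X]addr0; apply: cvgD => //; apply: cvg_cst.
Qed.

Lemma mu_cvg : (fun n => (A n)%:R / ((B n)%:R - (A n)%:R) : R) @ \oo --> (l - 1)^-1.
Proof.
rewrite -cvg_shiftS.
have -> : [sequence (A n.+1)%:R / ((B n.+1)%:R - (A n.+1)%:R) : R]_n
   = (fun n => ((B n.+1)%:R / (A n.+1)%:R - 1)^-1).
  apply/funext => n /=.
  have a0 : (A n.+1)%:R != 0 :> R by rewrite pnatr_eq0 -lt0n (A_pos r3 HA HB H0 Hb0).
  have -> : (B n.+1)%:R / (A n.+1)%:R - 1 = ((B n.+1)%:R - (A n.+1)%:R) / (A n.+1)%:R :> R.
    by field.
  by rewrite invf_div.
apply: cvgV; first by have := Lgt1 R r3; rewrite -/l; lra.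
apply: cvgB; last exact: cvg_cst.
by have := nu_cvg; rewrite -cvg_shiftS.
Qed.

Lemma key_ineq (a b : R) : 0 < a -> a < b -> b - l * a < 0 ->
  b / (r%:R * b - a - b) < a / (b - a).
Proof.
move=> a0 ab hv.
have l1 := Lgt1 R r3; rewrite -/l in l1.
have hl := Lsq R r3; rewrite -/l in hl.
have rR := r3R R r3.
have hw : 0 < l * b - a by nra.
have e : (b - l * a) * (l * b - a) = l * (b * b - r%:R * a * b + a * a).
  apply/eqP; rewrite -subr_eq0; apply/eqP.
  transitivity (- (a * b) * (l ^+ 2 - (r%:R * l - 1))); first ring.
  by rewrite hl subrr mulr0.
have k1 : b * b - r%:R * a * b + a * a < 0.
  have : (b - l * a) * (l * b - a) < 0 by rewrite pmulr_llt0.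
  by rewrite e pmulr_rlt0 //; lra.
have D1 : 0 < r%:R * b - a - b by nra.
rewrite ltr_pdivrMr; last by lra.
rewrite mulrAC ltr_pdivlMr; last by lra.
nra.
Qed.

Hypothesis Ha0 : (0 < A 0)%N.
Hypothesis Hab0 : (A 0 < B 0)%N.
Hypothesis Hv0 : (B 0)%:R < l * (A 0)%:R.

Lemma mu_decr n : (A n.+1)%:R / ((B n.+1)%:R - (A n.+1)%:R) <
                  (A n)%:R / ((B n)%:R - (A n)%:R) :> R.
Proof.
have apos : (0 < A n)%N by case: n => [|n] //; apply: (A_pos r3 HA HB H0 Hb0).
have abn : (A n < B n)%N.
  case: n apos => [|n] // _; rewrite HA HB.
  case: (inv_seq r3 HA HB H0 Hb0 n) => h1 h2; nia.
have vn : vv R r A B n < 0.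
  have w0 : 0 < (l^-1) ^+ n.
    by apply: exprn_gt0; rewrite invr_gt0; have := Lgt1 R r3; rewrite -/l; lra.
  rewrite (vv_n R r3 HA HB H0 Hb0 n) pmulr_llt0 // /vv -/l; have := Hv0; lra.
rewrite (BR R r3 HA HB H0 Hb0 n) HA; apply: key_ineq.
- by rewrite ltr0n.
- by rewrite ltr_nat.
- by move: vn; rewrite /vv.
Qed.

End Seq2.

Section Fin.
Variables (R : realType) (k : fieldType) (r : nat).
Hypothesis r3 : (3 <= r)%N.
Let l := L_r R r.
Implicit Types X Y : krep k r.

Lemma lfacts : [/\ 1 < l, l ^+ 2 = r%:R * l - 1, r%:R < 2 * l & 3 <= r%:R :> R].
Proof. by split; [exact: Lgt1 | exact: Lsq | exact: Lgt | exact: r3R]. Qed.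

Lemma rk_psi_le X : (\rank (psi_mx X) <= rd2 X)%N /\ (\rank (psi_mx X) <= r * rd1 X)%N.
Proof.
split; first exact: rank_leq_col.
by rewrite -sum_const_r; apply: rank_leq_row.
Qed.

Lemma P_sigma X : (0 < rd1 X)%N -> (rd2 X)%:R <= l * (rd1 X)%:R ->
  (0 < rd1 (Defs.sigma X))%N /\
  (rd2 (Defs.sigma X))%:R <= l * (rd1 (Defs.sigma X))%:R.
Proof.
move=> a0 hb; have [l1 hl _ rR] := lfacts.
have [h1 h2] := rk_psi_le X.
have a0R : 0 < (rd1 X)%:R :> R by rewrite ltr0n.
have h1R : (\rank (psi_mx X))%:R <= (rd2 X)%:R :> R by rewrite ler_nat.
have e : (rd1 (Defs.sigma X))%:R = r%:R * (rd1 X)%:R - (\rank (psi_mx X))%:R :> R.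
  by rewrite sigma_rd1 natrB // natrM.
have lr : l * (r%:R - l) = 1 by rewrite mulrBr -expr2 hl; ring.
have rl : 0 < r%:R - l by nra.
have key : (rd1 X)%:R <= l * (r%:R * (rd1 X)%:R - (\rank (psi_mx X))%:R).
  have : l * (r%:R * (rd1 X)%:R - l * (rd1 X)%:R) = (rd1 X)%:R.
    by rewrite -mulrBl mulrA lr mul1r.
  nra.
split.
- rewrite -(ltr0n R) e; nra.
- by rewrite sigma_rd2 e.
Qed.

Lemma P_tau n X : (0 < rd1 X)%N -> (rd2 X)%:R <= l * (rd1 X)%:R ->
  ~ is_zero_rep (iter n (@Defs.tau k r) X).
Proof.
elim: n X => [|n IH] X a0 hb.
  by case => /= h; rewrite h in a0.
rewrite iterSr; have [a1 hb1] := P_sigma a0 hb.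
have [a2 hb2] := P_sigma a1 hb1.
exact: IH.
Qed.

Lemma zero_sigma X : rd1 X = 0%N -> is_zero_rep (Defs.sigma X).
Proof.
move=> a0; split; last by rewrite sigma_rd2.
apply/eqP; rewrite -leqn0; apply: leq_trans (rank_leq_row _) _.
by rewrite sum_const_r a0 muln0.
Qed.

Lemma zero_tau X : rd1 X = 0%N -> is_zero_rep (Defs.tau X).
Proof. by move=> a0; apply: zero_sigma; case: (zero_sigma a0). Qed.

Lemma step X : indecomposable X -> (0 < rd1 X)%N -> l * (rd1 X)%:R <= (rd2 X)%:R ->
  [/\ indecomposable (Defs.sigma X),
      l * (rd1 (Defs.sigma X))%:R <= (rd2 (Defs.sigma X))%:R &
      (rd1 (Defs.sigma X) + rd2 (Defs.sigma X) < rd1 X + rd2 X)%N].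
Proof.
move=> iX a0 hb; have [l1 hl l2 rR] := lfacts.
have rk := psi_full iX a0.
have [_ h2] := rk_psi_le X.
have a0R : 0 < (rd1 X)%:R :> R by rewrite ltr0n.
have e : (rd1 (Defs.sigma X))%:R = r%:R * (rd1 X)%:R - (rd2 X)%:R :> R.
  by rewrite sigma_rd1 rk natrB ?natrM // -rk.
split; first exact: sigma_indec.
- rewrite sigma_rd2 e.
  have : l * (r%:R * (rd1 X)%:R - l * (rd1 X)%:R) = (rd1 X)%:R.
    by rewrite -mulrBl mulrA mulrBr -expr2 hl; ring.
  nra.
- rewrite -(ltr_nat R) !natrD e sigma_rd2; nra.
Qed.

Lemma crux s X : (rd1 X + rd2 X <= s)%N -> indecomposable X ->
  l * (rd1 X)%:R <= (rd2 X)%:R -> exists n, is_zero_rep (iter n (@Defs.tau k r) X).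
Proof.
elim: s X => [|s IH] X hs iX hb.
  by case: iX => h _; move: h; rewrite leqn0 in hs; rewrite (eqP hs).
have [a0|a0] := posnP (rd1 X); first by exists 1%N; apply: zero_tau.
have [iY hbY sY] := step iX a0 hb.
have [b0|b0] := posnP (rd1 (Defs.sigma X)).
  by exists 1%N; apply: zero_sigma.
have [iZ hbZ sZ] := step iY b0 hbY.
have hs' : (rd1 (Defs.sigma (Defs.sigma X)) + rd2 (Defs.sigma (Defs.sigma X)) <= s)%N.
  rewrite -ltnS; apply: leq_trans hs; apply: ltn_trans sZ sY.
have [n hn] := IH _ hs' iZ hbZ.
by exists n.+1; rewrite iterSr.
Qed.

End Fin.

Unset Implicit Arguments.

Lemma muN_lt (R : realType) (l a b : R) : 1 < l -> 0 < a -> l * a < b ->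
  a / (b - a) < (l - 1)^-1.
Proof.
move=> l1 a0 lab; rewrite -[(l - 1)^-1]div1r ltr_pdivrMr; last by nra.
rewrite mulrAC ltr_pdivlMr; last by lra.
nra.
Qed.

Lemma muM_gt (R : realType) (l a b : R) : 1 < l -> a < b -> b < l * a ->
  (l - 1)^-1 < a / (b - a).
Proof.
move=> l1 ab lab; rewrite -[(l - 1)^-1]div1r ltr_pdivrMr; last by lra.
rewrite mulrAC ltr_pdivlMr; last by lra.
nra.
Qed.

Theorem proposition6p2p1 (k : closedFieldType) (R : realType) (r : nat)
  (M N : krep k r) :
  (3 <= r)%N ->
  EKP M -> EKP N -> indecomposable M -> indecomposable N ->
  ~ krep_iso M (P0 k r) ->
  [/\ (fun n : nat => nu R (iter n (@sigma_inv k r) M)) @ \oo --> L_r R r,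
      (fun n : nat => mu R (iter n (@sigma_inv k r) M)) @ \oo
        --> (L_r R r - 1)^-1,
      regular M ->
        forall n : nat, mu R (iter n.+1 (@sigma_inv k r) M)
                        < mu R (iter n (@sigma_inv k r) M) &
      regular M -> preprojective N ->
        mu R N < (L_r R r - 1)^-1 < mu R M].
Proof.
move=> r3 EM EN iM iN _.
have r2 : (1 < r)%N by apply: leq_trans r3.
have r0 : (0 < r)%N by apply: ltnW.
pose A n := rd1 (iter n (@sigma_inv k r) M).
pose B n := rd2 (iter n (@sigma_inv k r) M).
have fr : forall n i, row_free (rmat (iter n (@sigma_inv k r) M) i).
  elim => [|n IH] i; first exact: EKP_arrow.
  rewrite iterS; exact: (sigma_inv_free r2 IH i).
have HA : forall n, A n.+1 = B n.
  by move=> n; rewrite /A /B iterS; case: (sigma_inv_dims r2 (fr n)).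
have HB : forall n, B n.+1 = (r * B n - A n)%N.
  by move=> n; rewrite /A /B iterS; case: (sigma_inv_dims r2 (fr n)).
have H0 : (A 0 <= B 0)%N by exact: EKP_le r0 EM.
have Hb0 : (0 < B 0)%N by case: iM => h _; rewrite /A /B /=; move: H0; rewrite /A /B /=; lia.
have [l1 _ _ _] := lfacts R r3.
have regM : regular M -> [/\ (0 < A 0)%N, (A 0 < B 0)%N & (B 0)%:R < L_r R r * (A 0)%:R :> R].
  case=> _ [npp _].
  have Hv : (B 0)%:R < L_r R r * (A 0)%:R :> R.
    rewrite ltNge; apply/negP => h; apply: npp; split => //.
    exact: (crux (R:=R) r3 (leqnn _) iM h).
  have Ha : (0 < A 0)%N.
    rewrite lt0n; apply/negP => /eqP h; move: Hv; rewrite h mulr0 ltNge.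
    by rewrite ler0n.
  by split => //; apply: EKP_lt.
split.
- exact (nu_cvg (R:=R) r3 HA HB H0 Hb0).
- exact (mu_cvg (R:=R) r3 HA HB H0 Hb0).
- move=> /regM [Ha0 Hab0 Hv0] n.
  exact: (mu_decr (R:=R) r3 HA HB H0 Hb0 Ha0 Hab0 Hv0 n).
- move=> /regM [Ha0 Hab0 Hv0] [_ [n zn]]; apply/andP; split.
  + have [a0|a0] := posnP (rd1 N).
      rewrite /mu a0 mul0r invr_gt0; lra.
    apply: muN_lt => //; first by rewrite ltr0n.
    rewrite ltNge; apply/negP => h.
    exact: (P_tau (R:=R) r3 a0 h zn).
  + by apply: muM_gt => //; rewrite ltr_nat.
Qed.
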